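(* Let $\Gamma$ be a non-elementary hyperbolic group endowed with an admissible metric which is strongly hyperbolic, let $C\ge0$ be a rough geodesic constant for this metric, and let $K>2C$. Set $$\Delta=\{(x,y)\in\Gamma\times\Gamma:\ K-C\le|x,y|\le K+C\},$$ on which $\Gamma$ acts by $g.(x,y)=(gx,gy)$, and for $g\in\Gamma$ define $c_g:\Delta\to\mathbb{R}$ by $c_g(x,y)=\langle g,x\rangle-\langle g,y\rangle$, where $\langle\cdot,\cdot\rangle$ is the Gromov product based at the identity. Then for all sufficiently large $p\in[1,\infty)$, one has $c_g\in\ell^p(\Delta)$ for every $g\in\Gamma$, and the affine isometric action of $\Gamma$ on $\ell^p(\Delta)$ given by $(g,\phi)\mapsto g.\phi+c_g$, where $(g.\phi)(x,y)=\phi(g^{-1}x,g^{-1}y)$, is well-defined and proper.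
   Context: Metric notation: $|x,y|$ is the distance, $|g|=|1,g|$, and the Gromov product with basepoint $o$ is $\langle x,y\rangle_o=\tfrac12(|o,x|+|o,y|-|x,y|)$. A metric space is strongly hyperbolic if $e^{-\langle x,y\rangle_o}\le e^{-\langle x,z\rangle_o}+e^{-\langle z,y\rangle_o}$ for all points $x,y,z,o$. A metric on a hyperbolic group $\Gamma$ is admissible if (i) it is left-invariant: $|gx,gy|=|x,y|$; (ii) it is roughly geodesic with constant $C\ge0$: for all $x,y\in\Gamma$ there is a map $\gamma:[a,b]\to\Gamma$ with $\gamma(a)=x$, $\gamma(b)=y$ and $|s-t|-C\le|\gamma(s),\gamma(t)|\le|s-t|+C$ for all $s,t\in[a,b]$; (iii) it is quasi-isometric to a word metric on $\Gamma$. The map $g\mapsto c_g$ satisfies the cocycle identity $c_{gh}=c_g+g.c_h$. The affine isometric action is proper if $\|c_g\|_p\to\infty$ as $g\to\infty$ in $\Gamma$ (equivalently, for every bounded set $B\subset\ell^p(\Delta)$ only finitely many $g$ satisfy $(g\cdot B)\cap B\neq\emptyset$). *)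

(* Defs.v *)
From Stdlib Require Import Reals List ZArith.
Import ListNotations.
Open Scope R_scope.

Section Defs.
Context {G : Type} (mul : G -> G -> G) (inv : G -> G) (e : G).

Definition is_group : Prop :=
  (forall x y z, mul x (mul y z) = mul (mul x y) z) /\
  (forall x, mul e x = x) /\ (forall x, mul x e = x) /\
  (forall x, mul (inv x) x = e) /\ (forall x, mul x (inv x) = e).

Fixpoint gpow_nat (g : G) (n : nat) : G :=
  match n with O => e | S n => mul g (gpow_nat g n) end.
Definition gpow (g : G) (k : Z) : G :=
  match k with
  | Z0 => e
  | Zpos p => gpow_nat g (Pos.to_nat p)
  | Zneg p => gpow_nat (inv g) (Pos.to_nat p)
  end.

Definition wprod (w : list G) : G := fold_right mul e w.

Definition word_over (S : list G) (w : list G) : Prop :=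
  forall s, In s w -> In s S \/ In (inv s) S.

Definition generates (S : list G) : Prop :=
  forall g, exists w, word_over S w /\ wprod w = g.

Definition word_length (S : list G) (g : G) (n : nat) : Prop :=
  (exists w, word_over S w /\ wprod w = g /\ length w = n) /\
  (forall w, word_over S w -> wprod w = g -> (n <= length w)%nat).

Definition word_dist (S : list G) (x y : G) (r : R) : Prop :=
  exists n, word_length S (mul (inv x) y) n /\ r = INR n.

Definition gromov (d : G -> G -> R) (o x y : G) : R :=
  (d o x + d o y - d x y) / 2.

Definition is_metric (d : G -> G -> R) : Prop :=
  (forall x y, 0 <= d x y) /\ (forall x y, d x y = 0 <-> x = y) /\
  (forall x y, d x y = d y x) /\ (forall x y z, d x z <= d x y + d y z).

(** Γ is a hyperbolic group: finitely generated by S, word metric δ-hyperbolic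
    (four-point condition). *)
Definition hyperbolic_group : Prop :=
  exists S : list G, generates S /\
  exists delta : R, 0 <= delta /\
  forall x y z o dxy dxz dyz dox doy doz,
    word_dist S x y dxy -> word_dist S x z dxz -> word_dist S y z dyz ->
    word_dist S o x dox -> word_dist S o y doy -> word_dist S o z doz ->
    (dox + doz - dxz) / 2 >=
      Rmin ((dox + doy - dxy) / 2) ((doy + doz - dyz) / 2) - delta.

(** non-elementary: not virtually cyclic (includes: not finite), i.e. no cyclic
    subgroup <g> has finite index. *)
Definition non_elementary : Prop :=
  ~ exists g : G, exists reps : list G,
      forall x, exists r k, In r reps /\ x = mul r (gpow g k).

Definition left_invariant (d : G -> G -> R) : Prop :=
  forall g x y, d (mul g x) (mul g y) = d x y.

Definition roughly_geodesic (d : G -> G -> R) (C : R) : Prop :=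
  forall x y, exists (a b : R) (gam : R -> G),
    a <= b /\ gam a = x /\ gam b = y /\
    forall s t, a <= s <= b -> a <= t <= b ->
      Rabs (s - t) - C <= d (gam s) (gam t) <= Rabs (s - t) + C.

Definition qi_to_word_metric (d : G -> G -> R) : Prop :=
  exists S : list G, generates S /\
  exists lam c : R, 1 <= lam /\ 0 <= c /\
  forall x y r, word_dist S x y r -> r / lam - c <= d x y <= lam * r + c.

Definition admissible (d : G -> G -> R) : Prop :=
  is_metric d /\ left_invariant d /\
  (exists C, 0 <= C /\ roughly_geodesic d C) /\ qi_to_word_metric d.

Definition strongly_hyperbolic (d : G -> G -> R) : Prop :=
  forall x y z o,
    exp (- gromov d o x y) <= exp (- gromov d o x z) + exp (- gromov d o z y).

Definition inDelta (d : G -> G -> R) (K C : R) (z : G * G) : Prop :=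
  K - C <= d (fst z) (snd z) <= K + C.

(** t^p for t >= 0, with 0^p = 0 *)
Definition rpow (t p : R) : R := if Req_EM_T t 0 then 0 else Rpower t p.

(** lp_le p f M :  sum_{z in Δ} |f z|^p <= M  (i.e. ||f||_p^p <= M),
    expressed as a bound on all finite partial sums. *)
Definition lp_le (d : G -> G -> R) (K C p : R) (f : G * G -> R) (M : R) : Prop :=
  forall l : list (G * G), NoDup l -> (forall z, In z l -> inDelta d K C z) ->
    fold_right Rplus 0 (map (fun z => rpow (Rabs (f z)) p) l) <= M.

Definition in_lp (d : G -> G -> R) (K C p : R) (f : G * G -> R) : Prop :=
  exists M, lp_le d K C p f M.

Definition lin_act (g : G) (phi : G * G -> R) : G * G -> R :=
  fun z => phi (mul (inv g) (fst z), mul (inv g) (snd z)).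

Definition cocycle (d : G -> G -> R) (g : G) : G * G -> R :=
  fun z => gromov d e g (fst z) - gromov d e g (snd z).

Definition aff_act (d : G -> G -> R) (g : G) (phi : G * G -> R) : G * G -> R :=
  fun z => lin_act g phi z + cocycle d g z.

End Defs.

(* Main.v *)
Require Import Defs.
From Stdlib Require Import Reals List Lra Lia ZArith Arith Classical ClassicalEpsilon.
Import ListNotations.
Open Scope R_scope.



Lemma Rle_exp x y : x <= y -> exp x <= exp y.
Proof. intros [H|H]; [left; now apply exp_increasing | subst; lra]. Qed.

Lemma Rle_ln x y : 0 < x -> x <= y -> ln x <= ln y.
Proof. intros Hx [H|H]; [left; now apply ln_increasing | subst; lra]. Qed.

Lemma rpow_nonneg t p : 0 <= rpow t p.
Proof. unfold rpow, Rpower. destruct (Req_EM_T t 0); [lra|]. left; apply exp_pos. Qed.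

Lemma rpow_pos t p : t <> 0 -> rpow t p = Rpower t p.
Proof. unfold rpow. destruct (Req_EM_T t 0); [contradiction|reflexivity]. Qed.

Lemma rpow_mono t s p : 0 <= p -> 0 <= t <= s -> rpow t p <= rpow s p.
Proof.
  intros Hp [Ht Hts]. unfold rpow.
  destruct (Req_EM_T t 0). { destruct (Req_EM_T s 0); [lra|]. left; apply exp_pos. }
  destruct (Req_EM_T s 0); [lra|]. unfold Rpower. apply Rle_exp.
  apply Rmult_le_compat_l; auto. apply Rle_ln; lra.
Qed.

Lemma rpow_exp a p : rpow (exp a) p = exp (p * a).
Proof. rewrite rpow_pos by (apply exp_neq_0). unfold Rpower. now rewrite ln_exp. Qed.

Lemma rpow_sum2 a b p : 0 <= p ->
  rpow (Rabs (a + b)) p <= Rpower 2 p * (rpow (Rabs a) p + rpow (Rabs b) p).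
Proof.
  intros Hp.
  assert (Hm : Rabs (a+b) <= 2 * Rmax (Rabs a) (Rabs b)).
  { pose proof (Rabs_triang a b). pose proof (Rmax_l (Rabs a) (Rabs b)).
    pose proof (Rmax_r (Rabs a) (Rabs b)). lra. }
  assert (H0 : 0 <= Rmax (Rabs a) (Rabs b)).
  { pose proof (Rmax_l (Rabs a) (Rabs b)). pose proof (Rabs_pos a). lra. }
  eapply Rle_trans. { apply rpow_mono; [lra| split; [apply Rabs_pos|exact Hm]]. }
  pose proof (rpow_nonneg (Rabs a) p). pose proof (rpow_nonneg (Rabs b) p).
  assert (HP2 : 0 < Rpower 2 p) by (unfold Rpower; apply exp_pos).
  destruct (Req_EM_T (Rmax (Rabs a) (Rabs b)) 0) as [E|E].
  { rewrite E, Rmult_0_r. unfold rpow at 1. destruct (Req_EM_T 0 0); [|lra].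
    apply Rmult_le_pos; lra. }
  rewrite rpow_pos by lra. rewrite <- Rpower_mult_distr by lra.
  apply Rmult_le_compat_l; [lra|].
  rewrite <- rpow_pos by lra.
  unfold Rmax in *; destruct (Rle_dec (Rabs a) (Rabs b)); lra.
Qed.

Definition sumR {A} (f : A -> R) (l : list A) := fold_right Rplus 0 (map f l).

Lemma sumR_cons {A} (f : A -> R) z l : sumR f (z :: l) = f z + sumR f l.
Proof. reflexivity. Qed.

Lemma sumR_le {A} (f g : A -> R) l : (forall z, In z l -> f z <= g z) -> sumR f l <= sumR g l.
Proof.
  unfold sumR; induction l; intros H; simpl. lra.
  apply Rplus_le_compat; [apply H; now left| apply IHl; intros; apply H; now right].
Qed.

Lemma sumR_ext {A} (f g : A -> R) l : (forall z, f z = g z) -> sumR f l = sumR g l.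
Proof. intros H; induction l; [reflexivity|]. unfold sumR in *; simpl. now rewrite H, IHl. Qed.

Lemma sumR_plus {A} (f g : A -> R) l : sumR (fun z => f z + g z) l = sumR f l + sumR g l.
Proof. induction l; unfold sumR in *; simpl; [lra|]. rewrite IHl; lra. Qed.

Lemma sumR_scal {A} (f : A -> R) c l : sumR (fun z => c * f z) l = c * sumR f l.
Proof. induction l; unfold sumR in *; simpl; [lra|]. rewrite IHl; lra. Qed.

Lemma sumR_map {A B} (f : B -> R) (h : A -> B) l : sumR f (map h l) = sumR (fun z => f (h z)) l.
Proof. unfold sumR. now rewrite map_map. Qed.

Lemma sumR_ge {A} (f : A -> R) c l : (forall z, In z l -> c <= f z) -> INR (length l) * c <= sumR f l.
Proof.
  unfold sumR; induction l; intros H; cbn [length map fold_right]. simpl; lra. rewrite S_INR.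
  assert (c <= f a) by (apply H; now left).
  assert (INR (length l) * c <= fold_right Rplus 0 (map f l)) by (apply IHl; intros; apply H; now right).
  lra.
Qed.

Lemma sumR_nonneg {A} (f : A -> R) l : (forall z, 0 <= f z) -> 0 <= sumR f l.
Proof. intros H; induction l; unfold sumR in *; simpl; [lra|]. specialize (H a); lra. Qed.

Lemma sumR_const_le {A} (f : A -> R) c l : (forall z, In z l -> f z <= c) -> sumR f l <= INR (length l) * c.
Proof.
  unfold sumR; induction l; intros H; cbn [length map fold_right]. simpl; lra. rewrite S_INR.
  assert (f a <= c) by (apply H; now left).
  assert (fold_right Rplus 0 (map f l) <= INR (length l) * c) by (apply IHl; intros; apply H; now right).
  lra.
Qed.



Lemma g_cancel_l {G} (mul : G -> G -> G) inv e : is_group mul inv e ->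
  forall g x, mul (inv g) (mul g x) = x.
Proof. intros (A & L & Rr & IL & IR) g x. now rewrite A, IL, L. Qed.

Lemma g_cancel_r {G} (mul : G -> G -> G) inv e : is_group mul inv e ->
  forall g x, mul g (mul (inv g) x) = x.
Proof. intros (A & L & Rr & IL & IR) g x. now rewrite A, IR, L. Qed.

Lemma g_inv_e {G} (mul : G -> G -> G) inv e : is_group mul inv e -> inv e = e.
Proof. intros (A & L & Rr & IL & IR). rewrite <- (L (inv e)). apply IR. Qed.

Lemma g_inv_inv {G} (mul : G -> G -> G) inv e : is_group mul inv e -> forall g, inv (inv g) = g.
Proof.
  intros Hg g. pose proof Hg as (A & L & Rr & IL & IR).
  rewrite <- (Rr (inv (inv g))). rewrite <- (IL g). rewrite A. rewrite IL. apply L.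
Qed.

Lemma g_inv_mul {G} (mul : G -> G -> G) inv e : is_group mul inv e ->
  forall g h, inv (mul g h) = mul (inv h) (inv g).
Proof.
  intros Hg g h. pose proof Hg as (A & L & Rr & IL & IR).
  assert (H1 : mul (mul g h) (mul (inv h) (inv g)) = e).
  { rewrite <- A. rewrite (g_cancel_r _ _ _ Hg). apply IR. }
  rewrite <- (Rr (inv (mul g h))). rewrite <- H1. rewrite A, IL. apply L.
Qed.

Lemma g_mul_inj {G} (mul : G -> G -> G) inv e : is_group mul inv e ->
  forall g x y, mul g x = mul g y -> x = y.
Proof.
  intros Hg g x y H. rewrite <- (g_cancel_l _ _ _ Hg g x), <- (g_cancel_l _ _ _ Hg g y). now rewrite H.
Qed.

Lemma lp_ext {G} (d : G -> G -> R) K C p (f f' : G * G -> R) M :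
  (forall z, f z = f' z) -> lp_le d K C p f M -> lp_le d K C p f' M.
Proof.
  intros E H l Hl Hd. change (sumR (fun z => rpow (Rabs (f' z)) p) l <= M).
  rewrite <- (sumR_ext (fun z => rpow (Rabs (f z)) p)) by (intros; now rewrite E).
  now apply H.
Qed.

Lemma inDelta_mul {G} (mul : G -> G -> G) d K C g z :
  left_invariant mul d -> inDelta d K C z -> inDelta d K C (mul g (fst z), mul g (snd z)).
Proof. intros LI H. unfold inDelta in *. simpl. now rewrite LI. Qed.

Lemma lp_lin {G} (mul : G -> G -> G) inv e d K C p f M g :
  is_group mul inv e -> left_invariant mul d ->
  lp_le d K C p f M -> lp_le d K C p (lin_act mul inv g f) M.
Proof.
  intros Hg LI H l Hl Hd.
  set (hg := fun z : G * G => (mul (inv g) (fst z), mul (inv g) (snd z))).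
  change (sumR (fun z => rpow (Rabs (f (hg z))) p) l <= M).
  rewrite <- (sumR_map (fun z => rpow (Rabs (f z)) p) hg).
  apply H.
  - apply NoDup_map_NoDup_ForallPairs; auto.
    intros [x y] [x' y'] _ _. unfold hg; simpl. intros E. injection E; intros E2 E1.
    apply (g_mul_inj _ _ _ Hg) in E1. apply (g_mul_inj _ _ _ Hg) in E2. now subst.
  - intros z Hz. apply in_map_iff in Hz. destruct Hz as [z' [<- Hz']].
    apply inDelta_mul; auto.
Qed.

Lemma lin_inv {G} (mul : G -> G -> G) inv e g f z : is_group mul inv e ->
  lin_act mul inv (inv g) (lin_act mul inv g f) z = f z.
Proof.
  intros Hg. unfold lin_act; simpl. rewrite (g_inv_inv _ _ _ Hg).
  rewrite !(g_cancel_l _ _ _ Hg). now destruct z.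
Qed.

Lemma lp_lin_iff {G} (mul : G -> G -> G) inv e d K C p f M g :
  is_group mul inv e -> left_invariant mul d ->
  lp_le d K C p f M <-> lp_le d K C p (lin_act mul inv g f) M.
Proof.
  intros Hg LI. split; [apply lp_lin with e; auto|].
  intros H. apply (lp_ext _ _ _ _ (lin_act mul inv (inv g) (lin_act mul inv g f))).
  { intros; now apply lin_inv with e. }
  now apply lp_lin with e.
Qed.



Definition natup (r : R) : nat := Z.to_nat (up r).

Lemma natup_ge n r : INR n <= r -> (n <= natup r)%nat.
Proof.
  intros H. destruct (archimed r) as [H1 H2]. unfold natup.
  assert (Hz : (0 <= up r)%Z). { apply le_IZR. pose proof (pos_INR n). lra. }
  assert (E : INR (Z.to_nat (up r)) = IZR (up r)) by (rewrite INR_IZR_INZ, Z2Nat.id; auto).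
  assert (INR n < INR (Z.to_nat (up r))) by lra. apply INR_lt in H0. lia.
Qed.

Fixpoint Wle {G} (A : list G) (m : nat) : list (list G) :=
  match m with
  | O => [[]]
  | S m => [] :: flat_map (fun a => map (cons a) (Wle A m)) A
  end.

Lemma length_flat_map_const {A B C} (f : A -> B -> C) (l : list A) (W : list B) :
  length (flat_map (fun a => map (f a) W) l) = (length l * length W)%nat.
Proof. induction l; simpl; auto. rewrite length_app, length_map, IHl. reflexivity. Qed.

Lemma Wle_in {G} (A : list G) m w : (forall s, In s w -> In s A) -> (length w <= m)%nat -> In w (Wle A m).
Proof.
  revert w; induction m; intros w Hw Hl.
  - destruct w; [now left| simpl in Hl; lia].
  - destruct w as [|s w]; [now left|]. right. apply in_flat_map. exists s. split.
    + apply Hw; now left.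
    + apply in_map. apply IHm; [intros; apply Hw; now right| simpl in Hl; lia].
Qed.

Lemma Wle_len {G} (A : list G) m : INR (length (Wle A m)) <= (INR (length A) + 1) ^ m.
Proof.
  induction m. simpl; lra.
  cbn [Wle length pow]. rewrite length_flat_map_const. rewrite S_INR, mult_INR.
  pose proof (pos_INR (length A)).
  pose proof (pow_R1_Rle (INR (length A) + 1) m ltac:(lra)).
  assert (INR (length A) * INR (length (Wle A m)) <= INR (length A) * (INR (length A) + 1) ^ m)
    by (apply Rmult_le_compat_l; auto).
  nra.
Qed.

Definition Alph {G} (inv : G -> G) (S : list G) := S ++ map inv S.

Lemma word_over_alph {G} (mul : G -> G -> G) inv e S w : is_group mul inv e ->
  word_over inv S w -> forall s, In s w -> In s (Alph inv S).
Proof.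
  intros Hg Hw s Hs. unfold Alph. apply in_or_app. destruct (Hw s Hs) as [H|H]; [now left|right].
  rewrite <- (g_inv_inv _ _ _ Hg s). now apply in_map.
Qed.

Lemma exists_wl {G} (mul : G -> G -> G) inv e S : generates mul inv e S ->
  forall g, exists n, word_length mul inv e S g n.
Proof.
  intros Hgen g.
  set (P := fun n => exists w, word_over inv S w /\ wprod mul e w = g /\ length w = n).
  destruct (dec_inh_nat_subset_has_unique_least_element P) as [n [[Pn Hmin] _]].
  - intros n; apply classic.
  - destruct (Hgen g) as [w [H1 H2]]. exists (length w). exists w; auto.
  - exists n. split; auto. intros w H1 H2. apply Hmin. exists w; auto.
Qed.

Lemma word_dist_e {G} (mul : G -> G -> G) inv e S g n : is_group mul inv e ->
  word_length mul inv e S g n -> word_dist mul inv e S e g (INR n).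
Proof.
  intros Hg H. exists n. split; auto. rewrite (g_inv_e _ _ _ Hg).
  destruct Hg as (_ & L & _). now rewrite L.
Qed.

Lemma fin_ball {G} (mul : G -> G -> G) inv e d S lam c : is_group mul inv e ->
  generates mul inv e S -> 1 <= lam -> 0 <= c ->
  (forall x y r, word_dist mul inv e S x y r -> r / lam - c <= d x y <= lam * r + c) ->
  forall R0, exists l, forall g, d e g <= R0 -> In g l.
Proof.
  intros Hg Hgen Hlam Hc Hqi R0.
  exists (map (wprod mul e) (Wle (Alph inv S) (natup (lam * (R0 + c))))).
  intros g Hd. destruct (exists_wl _ _ _ _ Hgen g) as [n Hn].
  pose proof (Hqi _ _ _ (word_dist_e _ _ _ _ _ _ Hg Hn)) as [H1 _].
  destruct Hn as [[w [Hw1 [Hw2 Hw3]]] _].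
  rewrite <- Hw2. apply in_map. apply Wle_in.
  - eapply word_over_alph; eauto.
  - rewrite Hw3. apply natup_ge.
    assert (INR n / lam <= R0 + c) by lra.
    apply Rmult_le_reg_r with (/ lam). apply Rinv_0_lt_compat; lra.
    replace (lam * (R0 + c) * / lam) with (R0 + c) by (field; lra). exact H.
Qed.



Lemma floor_nat r : 0 <= r -> exists n : nat, INR n <= r < INR n + 1.
Proof.
  intros Hr. destruct (archimed r) as [H1 H2].
  assert (Hz : (0 < up r)%Z) by (apply lt_IZR; lra).
  exists (Z.to_nat (up r - 1)).
  rewrite INR_IZR_INZ, Z2Nat.id by lia. rewrite minus_IZR. simpl. lra.
Qed.

Lemma pair_bound {G} (d : G -> G -> R) C (gam : R -> G) a b s t :
  (forall s t, a <= s <= b -> a <= t <= b ->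
      Rabs (s - t) - C <= d (gam s) (gam t) <= Rabs (s - t) + C) ->
  a <= s -> s <= t -> t <= b ->
  gromov d (gam a) (gam b) (gam s) - gromov d (gam a) (gam b) (gam t) <= (s - t) + 2 * C.
Proof.
  intros H Has Hst Htb. unfold gromov.
  assert (E1 : Rabs (a - s) = s - a) by (rewrite Rabs_minus_sym; apply Rabs_pos_eq; lra).
  assert (E2 : Rabs (a - t) = t - a) by (rewrite Rabs_minus_sym; apply Rabs_pos_eq; lra).
  assert (E3 : Rabs (b - s) = b - s) by (apply Rabs_pos_eq; lra).
  assert (E4 : Rabs (b - t) = b - t) by (apply Rabs_pos_eq; lra).
  pose proof (H a s ltac:(lra) ltac:(lra)) as H1.
  pose proof (H a t ltac:(lra) ltac:(lra)) as H2.
  pose proof (H b s ltac:(lra) ltac:(lra)) as H3.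
  pose proof (H b t ltac:(lra) ltac:(lra)) as H4.
  rewrite E1 in H1; rewrite E2 in H2; rewrite E3 in H3; rewrite E4 in H4. lra.
Qed.

Lemma proper_bound {G} (e : G) d C K p M :
  is_metric d -> roughly_geodesic d C -> 0 <= C -> K > 2 * C -> 0 < p ->
  exists R0, forall g, lp_le d K C p (cocycle e d g) M -> d e g <= R0.
Proof.
  intros Hmet Hgeo HC HK Hp.
  set (del := Rpower (K - 2 * C) p).
  assert (Hdel : 0 < del) by (unfold del, Rpower; apply exp_pos).
  exists ((M / del + 1) * K + C). intros g H.
  destruct (Hgeo e g) as (a & b & gam & Hab & Ha & Hb & Hg).
  assert (HK0 : 0 < K) by lra.
  destruct (floor_nat ((b - a) / K)) as [n [Hn1 Hn2]].
  { apply Rmult_le_pos; [lra| left; apply Rinv_0_lt_compat; lra]. }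
  assert (HnK : INR n * K <= b - a).
  { apply Rmult_le_compat_r with (r := K) in Hn1; [|lra].
    replace ((b - a) / K * K) with (b - a) in Hn1 by (field; lra). exact Hn1. }
  assert (HnK2 : b - a < (INR n + 1) * K).
  { apply Rmult_lt_compat_r with (r := K) in Hn2; [|lra].
    replace ((b - a) / K * K) with (b - a) in Hn2 by (field; lra). exact Hn2. }
  set (l := map (fun i => (gam (a + INR i * K), gam (a + INR (S i) * K))) (seq 0 n)).
  assert (Hrange : forall i, In i (seq 0 n) ->
     a <= a + INR i * K /\ a + INR i * K <= a + INR (S i) * K /\ a + INR (S i) * K <= b).
  { intros i Hi. apply in_seq in Hi.
    assert (INR (S i) <= INR n) by (apply le_INR; lia).
    pose proof (pos_INR i). rewrite S_INR in *. nra. }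
  assert (Hsum : INR (length l) * del <= M).
  { eapply Rle_trans; [| apply H].
    - apply sumR_ge. intros z Hz. unfold l in Hz. apply in_map_iff in Hz.
      destruct Hz as [i [<- Hi]]. destruct (Hrange i Hi) as (R1 & R2 & R3).
      unfold del. rewrite <- rpow_pos by lra. apply rpow_mono; [lra|].
      split; [lra|]. unfold cocycle; cbn [fst snd]. rewrite <- Ha, <- Hb.
      pose proof (pair_bound d C gam a b _ _ Hg R1 R2 R3).
      rewrite S_INR in *. rewrite Rabs_left1; lra.
    - unfold l. apply NoDup_map_NoDup_ForallPairs; [|apply seq_NoDup].
      intros i j Hi Hj E. injection E; intros _ E1.
      destruct (Hrange i Hi) as (R1 & R2 & R3). destruct (Hrange j Hj) as (R1' & R2' & R3').
      destruct (Nat.lt_total i j) as [Hij|[Hij|Hij]]; auto; exfalso.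
      + pose proof (Hg (a + INR i * K) (a + INR j * K) ltac:(lra) ltac:(lra)) as [Hd _].
        rewrite E1 in Hd. destruct Hmet as (_ & Hz & _). rewrite (proj2 (Hz _ _) eq_refl) in Hd.
        pose proof (le_INR _ _ Hij) as Hij2. rewrite S_INR in Hij2.
        rewrite Rabs_left1 in Hd by nra. nra.
      + pose proof (Hg (a + INR i * K) (a + INR j * K) ltac:(lra) ltac:(lra)) as [Hd _].
        rewrite E1 in Hd. destruct Hmet as (_ & Hz & _). rewrite (proj2 (Hz _ _) eq_refl) in Hd.
        pose proof (le_INR _ _ Hij) as Hij2. rewrite S_INR in Hij2.
        rewrite Rabs_pos_eq in Hd by nra. nra.
    - intros z Hz. unfold l in Hz. apply in_map_iff in Hz.
      destruct Hz as [i [<- Hi]]. destruct (Hrange i Hi) as (R1 & R2 & R3).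
      unfold inDelta; cbn [fst snd].
      pose proof (Hg (a + INR i * K) (a + INR (S i) * K) ltac:(lra) ltac:(lra)) as Hd.
      rewrite S_INR in *.
      replace (a + INR i * K - (a + (INR i + 1) * K)) with (- K) in Hd by ring.
      rewrite Rabs_Ropp, Rabs_pos_eq in Hd by lra. lra. }
  unfold l in Hsum. rewrite length_map, length_seq in Hsum.
  assert (INR n <= M / del).
  { apply Rmult_le_reg_r with del; auto. unfold Rdiv. rewrite Rmult_assoc, Rinv_l by lra. lra. }
  pose proof (Hg a b ltac:(lra) ltac:(lra)) as [_ Hd]. rewrite Ha, Hb in Hd.
  rewrite Rabs_minus_sym, Rabs_pos_eq in Hd by lra. nra.
Qed.



Fixpoint sumN (f : nat -> R) (n : nat) : R :=
  match n with O => 0 | S n => sumN f n + f n end.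

Lemma sumN_ext f g n : (forall k, (k < n)%nat -> f k = g k) -> sumN f n = sumN g n.
Proof. induction n; intros H; simpl; auto. rewrite IHn, H; auto; intros; apply H; lia. Qed.

Lemma sumN_le f g n : (forall k, (k < n)%nat -> f k <= g k) -> sumN f n <= sumN g n.
Proof. induction n; intros H; simpl. lra. apply Rplus_le_compat; [apply IHn; intros; apply H; lia| apply H; lia]. Qed.

Lemma sumN_plus f g n : sumN (fun k => f k + g k) n = sumN f n + sumN g n.
Proof. induction n; simpl. lra. rewrite IHn; lra. Qed.

Lemma sumN_zero n : sumN (fun _ => 0) n = 0.
Proof. induction n; simpl; [lra|rewrite IHn; lra]. Qed.

Lemma sumN_delta (b : nat -> R) j n :
  sumN (fun k => (if Nat.eqb j k then 1 else 0) * b k) n = if Nat.ltb j n then b j else 0.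
Proof.
  induction n; simpl. reflexivity. rewrite IHn.
  destruct (Nat.eqb j n) eqn:E1.
  - apply Nat.eqb_eq in E1. subst. rewrite (proj2 (Nat.ltb_ge n n)) by lia.
    rewrite (proj2 (Nat.ltb_lt n (S n))) by lia. lra.
  - apply Nat.eqb_neq in E1. destruct (Nat.ltb j n) eqn:E2.
    + apply Nat.ltb_lt in E2. rewrite (proj2 (Nat.ltb_lt j (S n))) by lia. lra.
    + apply Nat.ltb_ge in E2. rewrite (proj2 (Nat.ltb_ge j (S n))) by lia. lra.
Qed.

Lemma regroup {A} (lev : A -> nat) (b : nat -> R) N l :
  (forall z, In z l -> (lev z < N)%nat) ->
  sumR (fun z => b (lev z)) l =
  sumN (fun k => INR (length (filter (fun z => Nat.eqb (lev z) k) l)) * b k) N.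
Proof.
  induction l as [|z l IH]; intros H.
  - transitivity (sumN (fun _ => 0) N); [rewrite sumN_zero; reflexivity|].
    apply sumN_ext; intros; simpl; lra.
  - rewrite sumR_cons, IH by (intros; apply H; now right).
    transitivity (sumN (fun k => (if Nat.eqb (lev z) k then 1 else 0) * b k
                   + INR (length (filter (fun z0 => Nat.eqb (lev z0) k) l)) * b k) N).
    + rewrite sumN_plus, sumN_delta.
      rewrite (proj2 (Nat.ltb_lt _ _)) by (apply H; now left). reflexivity.
    + apply sumN_ext. intros k _. simpl. destruct (Nat.eqb (lev z) k).
      * cbn [length]. rewrite S_INR. lra.
      * lra.
Qed.

Lemma geom r n : 0 <= r < 1 -> sumN (fun k => r ^ k) n <= 1 / (1 - r).
Proof.
  intros Hr. assert (E : sumN (fun k => r ^ k) n * (1 - r) = 1 - r ^ n).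
  { induction n; simpl. lra. rewrite Rmult_plus_distr_r, IHn. ring. }
  assert (0 <= r ^ n) by (apply pow_le; lra).
  apply Rmult_le_reg_r with (1 - r); [lra|]. rewrite E. unfold Rdiv.
  rewrite Rmult_assoc, Rinv_l by lra. lra.
Qed.

Lemma lev_max {A} (lev : A -> nat) l : forall z, In z l -> (lev z < S (fold_right max 0%nat (map lev l)))%nat.
Proof.
  induction l; simpl; intros z Hz; [contradiction|]. destruct Hz as [<-|Hz]; [lia|].
  specialize (IHl z Hz). lia.
Qed.



Lemma key_exp A B r : B <= A -> exp (- B) - exp (- A) <= r -> A - B <= r * exp A.
Proof.
  intros HAB H. pose proof (exp_ineq1_le (A - B)).
  assert (E : exp (A - B) = exp A * exp (- B)) by (unfold Rminus; apply exp_plus).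
  assert (E2 : exp A * exp (- A) = 1) by (rewrite <- exp_plus; replace (A + - A) with 0 by ring; apply exp_0).
  pose proof (exp_pos A).
  assert (exp A * (exp (-B) - exp (-A)) <= exp A * r) by (apply Rmult_le_compat_l; lra).
  nra.
Qed.

Lemma gromov_sym {G} (d : G -> G -> R) o x y : is_metric d -> gromov d o x y = gromov d o y x.
Proof. intros (_ & _ & Hs & _). unfold gromov. rewrite (Hs x y). lra. Qed.

Lemma decay {G} (e : G) d K C g x y : is_metric d -> strongly_hyperbolic d -> d x y <= K + C ->
  Rabs (gromov d e g x - gromov d e g y) <= exp (d e g + K + C - d e x).
Proof.
  intros Hm Hs Hxy. pose proof Hm as (Hpos & Hz & Hsym & Htr).
  pose proof (Hs g x y e) as S1. pose proof (Hs g y x e) as S2.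
  rewrite (gromov_sym d e y x Hm) in S1.
  set (A := gromov d e g x) in *. set (B := gromov d e g y) in *.
  set (r := exp (- gromov d e x y)) in *.
  assert (HA : A <= d e g) by (unfold A, gromov; pose proof (Htr e g x); pose proof (Hsym g x); lra).
  assert (HB : B <= d e g) by (unfold B, gromov; pose proof (Htr e g y); pose proof (Hsym g y); lra).
  assert (Hr : r <= exp (K + C - d e x)).
  { unfold r. apply Rle_exp. unfold gromov. pose proof (Htr e x y). pose proof (Htr e y x).
    pose proof (Hsym x y). lra. }
  assert (Hr0 : 0 <= r) by (left; apply exp_pos).
  assert (Eq : exp (d e g + K + C - d e x) = exp (K + C - d e x) * exp (d e g))
    by (rewrite <- exp_plus; f_equal; ring).
  rewrite Eq.
  destruct (Rle_or_lt B A) as [H|H].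
  - rewrite Rabs_pos_eq by lra. pose proof (key_exp A B r H ltac:(lra)).
    pose proof (Rle_exp _ _ HA). pose proof (exp_pos A).
    assert (r * exp A <= exp (K + C - d e x) * exp (d e g)) by (apply Rmult_le_compat; lra).
    lra.
  - rewrite Rabs_left by lra. pose proof (key_exp B A r ltac:(lra) ltac:(lra)).
    pose proof (Rle_exp _ _ HB). pose proof (exp_pos B).
    assert (r * exp B <= exp (K + C - d e x) * exp (d e g)) by (apply Rmult_le_compat; lra).
    lra.
Qed.

Lemma exp_pow x n : exp x ^ n = exp (INR n * x).
Proof.
  induction n. simpl. rewrite Rmult_0_l, exp_0; reflexivity.
  rewrite S_INR. simpl pow. rewrite IHn, <- exp_plus. f_equal. ring.
Qed.



Lemma cocycle_lp {G} (mul : G -> G -> G) inv e d S lam c K C p g :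
  is_group mul inv e -> is_metric d -> strongly_hyperbolic d ->
  generates mul inv e S -> 1 <= lam -> 0 <= c ->
  (forall x y r, word_dist mul inv e S x y r -> r / lam - c <= d x y <= lam * r + c) ->
  0 < p -> lam * (ln (INR (length (Alph inv S)) + 1) + 1) <= p ->
  in_lp d K C p (cocycle e d g).
Proof.
  intros Hg Hm Hs Hgen Hlam Hc Hqi Hp Hp0.
  assert (Hwl : forall x, {n | word_length mul inv e S x n})
    by (intros x; apply constructive_indefinite_description; eapply exists_wl; eauto).
  set (wl := fun x => proj1_sig (Hwl x)).
  assert (Hwl' : forall x, word_length mul inv e S x (wl x)) by (intros; exact (proj2_sig (Hwl x))).
  set (Al := Alph inv S). set (a := INR (length Al)).
  set (m0 := natup (lam * (K + C + c))).
  set (W0 := INR (length (Wle Al m0))).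
  set (E := exp (p * (d e g + K + C + c))).
  set (r := exp (-1)).
  assert (Hr : 0 <= r < 1).
  { split; [left; apply exp_pos|]. unfold r. rewrite <- exp_0. apply exp_increasing; lra. }
  assert (HW0 : 0 <= W0) by apply pos_INR.
  assert (HE : 0 < E) by apply exp_pos.
  assert (Ha : 0 <= a) by apply pos_INR.
  exists (W0 * E * (1 / (1 - r))).
  intros l Hnd Hdl. change (sumR (fun z => rpow (Rabs (cocycle e d g z)) p) l <= W0 * E * (1 / (1 - r))).
  set (lev := fun z : G * G => wl (fst z)).
  set (b := fun k : nat => E * exp (- (p / lam) * INR k)).
  eapply Rle_trans with (sumR (fun z => b (lev z)) l).
  { apply sumR_le. intros [x y] Hz. pose proof (Hdl _ Hz) as [_ Hxy]. cbn [fst snd] in Hxy.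
    unfold cocycle; cbn [fst snd].
    pose proof (decay e d K C g x y Hm Hs Hxy) as Hdec.
    eapply Rle_trans. { apply rpow_mono; [lra| split; [apply Rabs_pos| exact Hdec]]. }
    rewrite rpow_exp. unfold b, lev, E; cbn [fst].
    rewrite <- exp_plus. apply Rle_exp.
    pose proof (Hqi _ _ _ (word_dist_e _ _ _ _ _ _ Hg (Hwl' x))) as [Hq _].
    assert (Hq2 : INR (wl x) / lam <= d e x + c) by lra.
    assert (p * (INR (wl x) / lam) <= p * (d e x + c)) by (apply Rmult_le_compat_l; lra).
    replace (- (p / lam) * INR (wl x)) with (- (p * (INR (wl x) / lam))) by (field; lra).
    nra. }
  rewrite (regroup lev b _ l (lev_max lev l)).
  eapply Rle_trans with (sumN (fun k => W0 * E * r ^ k) _).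
  { apply sumN_le. intros k _.
    set (Pk := flat_map (fun u => map (fun v => (wprod mul e u, mul (wprod mul e u) (wprod mul e v))) (Wle Al m0)) (Wle Al k)).
    assert (Hcnt : (length (filter (fun z => Nat.eqb (lev z) k) l) <= length Pk)%nat).
    { apply NoDup_incl_length; [apply NoDup_filter; auto|].
      intros [x y] Hz. apply filter_In in Hz as [Hz Hk]. apply Nat.eqb_eq in Hk.
      unfold lev in Hk; cbn [fst] in Hk.
      pose proof (Hdl _ Hz) as [_ Hxy]. cbn [fst snd] in Hxy.
      apply in_flat_map.
      destruct (Hwl' x) as [[w [Hw1 [Hw2 Hw3]]] _].
      exists w. split.
      { apply Wle_in; [eapply word_over_alph; eauto| lia]. }
      destruct (Hwl' (mul (inv x) y)) as [[v [Hv1 [Hv2 Hv3]]] _].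
      assert (Hdist : word_dist mul inv e S x y (INR (wl (mul (inv x) y)))) by (exists (wl (mul (inv x) y)); split; auto).
      pose proof (Hqi _ _ _ Hdist) as [Hq _].
      replace (x, y) with (wprod mul e w, mul (wprod mul e w) (wprod mul e v)).
      2:{ rewrite Hw2, Hv2. f_equal. apply (g_cancel_r _ _ _ Hg). }
      apply in_map_iff. exists v. split; [reflexivity|]. apply Wle_in; [eapply word_over_alph; eauto|].
      rewrite Hv3. apply natup_ge.
      assert (INR (wl (mul (inv x) y)) / lam <= K + C + c) by lra.
      apply Rmult_le_reg_r with (/ lam). apply Rinv_0_lt_compat; lra.
      replace (lam * (K + C + c) * / lam) with (K + C + c) by (field; lra). exact H. }
    assert (HPk : INR (length Pk) <= (a + 1) ^ k * W0).
    { unfold Pk. rewrite length_flat_map_const, mult_INR.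
      apply Rmult_le_compat_r; [apply HW0| apply Wle_len]. }
    apply le_INR in Hcnt.
    assert (Hb : 0 <= b k) by (unfold b; left; apply Rmult_lt_0_compat; [lra|apply exp_pos]).
    assert (Hgeo : (a + 1) ^ k * exp (- (p / lam) * INR k) <= r ^ k).
    { unfold r. rewrite exp_pow. rewrite <- (exp_ln (a + 1)) by lra. rewrite exp_pow, <- exp_plus.
      apply Rle_exp.
      assert (ln (a + 1) + 1 <= p / lam).
      { apply Rmult_le_reg_l with lam; [lra|]. replace (lam * (p / lam)) with p by (field; lra). exact Hp0. }
      pose proof (pos_INR k). nra. }
    unfold b. pose proof (exp_pos (- (p / lam) * INR k)).
    assert (INR (length (filter (fun z => Nat.eqb (lev z) k) l)) <= (a + 1) ^ k * W0) by lra.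
    assert (INR (length (filter (fun z => Nat.eqb (lev z) k) l)) * (E * exp (- (p / lam) * INR k))
            <= (a + 1) ^ k * W0 * (E * exp (- (p / lam) * INR k))) by (apply Rmult_le_compat_r; nra).
    assert (W0 * E * ((a + 1) ^ k * exp (- (p / lam) * INR k)) <= W0 * E * r ^ k)
      by (apply Rmult_le_compat_l; nra).
    nra. }
  assert (E1 : forall n, sumN (fun k => W0 * E * r ^ k) n = W0 * E * sumN (fun k => r ^ k) n).
  { induction n; simpl; [lra| rewrite IHn; lra]. }
  rewrite E1. apply Rmult_le_compat_l; [nra| apply geom; auto].
Qed.



Theorem mainTheorem2 (G : Type) (mul : G -> G -> G) (inv : G -> G) (e : G)
  (Hgrp : is_group mul inv e)
  (Hhyp : hyperbolic_group mul inv e)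
  (Hnonel : non_elementary mul inv e)
  (d : G -> G -> R)
  (Hadm : admissible mul inv e d)
  (Hstrong : strongly_hyperbolic d)
  (C : R) (HC : 0 <= C) (HCgeod : roughly_geodesic d C)
  (K : R) (HK : K > 2 * C) :
  exists p0 : R, forall p : R, 1 <= p -> p0 <= p ->
    (* c_g ∈ ℓ^p(Δ) for every g *)
    (forall g, in_lp d K C p (cocycle e d g)) /\
    (* the affine maps preserve ℓ^p(Δ) *)
    (forall g phi, in_lp d K C p phi ->
        in_lp d K C p (aff_act mul inv e d g phi)) /\
    (* each affine map is an isometry of ℓ^p(Δ) *)
    (forall g phi psi M,
        lp_le d K C p (fun z => phi z - psi z) M <->
        lp_le d K C p (fun z => aff_act mul inv e d g phi z
                               - aff_act mul inv e d g psi z) M) /\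
    (* it is an action (on functions on Δ) *)
    (forall phi z, inDelta d K C z -> aff_act mul inv e d e phi z = phi z) /\
    (forall g h phi z, inDelta d K C z ->
        aff_act mul inv e d (mul g h) phi z =
        aff_act mul inv e d g (aff_act mul inv e d h phi) z) /\
    (* properness: ||c_g||_p -> oo, i.e. for every M only finitely many g
       satisfy ||c_g||_p^p <= M *)
    (forall M, exists l : list G, forall g,
        lp_le d K C p (cocycle e d g) M -> In g l).
Proof.
  destruct Hadm as (Hmet & LI & _ & S & Hgen & lam & c & Hlam & Hc & Hqi).
  exists (lam * (ln (INR (length (Alph inv S)) + 1) + 1)).
  intros p Hp1 Hp0.
  assert (Hcoc : forall g, in_lp d K C p (cocycle e d g)).
  { intros g. apply (cocycle_lp mul inv e d S lam c K C p g); auto; lra. }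
  split; [exact Hcoc|].
  split.
  { intros g phi [M1 H1]. destruct (Hcoc g) as [M2 H2].
    exists (Rpower 2 p * (M1 + M2)). intros l Hnd Hdl.
    change (sumR (fun z => rpow (Rabs (aff_act mul inv e d g phi z)) p) l <= Rpower 2 p * (M1 + M2)).
    eapply Rle_trans.
    { apply sumR_le. intros z _. unfold aff_act. apply rpow_sum2. lra. }
    rewrite sumR_scal, sumR_plus. apply Rmult_le_compat_l; [left; unfold Rpower; apply exp_pos|].
    apply Rplus_le_compat.
    - apply (lp_lin mul inv e d K C p phi M1 g Hgrp LI H1); auto.
    - apply H2; auto. }
  split.
  { intros g phi psi M.
    rewrite (lp_lin_iff mul inv e d K C p _ M g Hgrp LI).
    split; apply lp_ext; intros z; unfold aff_act, lin_act; lra. }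
  split.
  { intros phi [x y] _. unfold aff_act, lin_act, cocycle, gromov; cbn [fst snd].
    rewrite (g_inv_e _ _ _ Hgrp). destruct Hgrp as (_ & L & _). rewrite !L.
    destruct Hmet as (_ & Hz & _). rewrite (proj2 (Hz e e) eq_refl). lra. }
  split.
  { intros g h phi [x y] _. unfold aff_act, lin_act, cocycle, gromov; cbn [fst snd].
    rewrite (g_inv_mul _ _ _ Hgrp).
    pose proof Hgrp as (A & L & Rr & IL & IR).
    rewrite <- !A.
    assert (D1 : forall u, d e (mul (inv g) u) = d g u).
    { intros u. rewrite <- (LI g e (mul (inv g) u)). now rewrite Rr, (g_cancel_r _ _ _ Hgrp). }
    assert (D2 : forall u, d h (mul (inv g) u) = d (mul g h) u).
    { intros u. rewrite <- (LI g h (mul (inv g) u)). now rewrite (g_cancel_r _ _ _ Hgrp). }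
    rewrite !D1, !D2. lra. }
  intros M.
  destruct (proper_bound e d C K p M Hmet HCgeod HC HK ltac:(lra)) as [R0 HR0].
  destruct (fin_ball mul inv e d S lam c Hgrp Hgen Hlam Hc Hqi R0) as [l Hl].
  exists l. intros g Hg. apply Hl, HR0, Hg.
Qed.
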